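(* Let $E,F$ be normed spaces over $\mathbb K$ with $F$ spherically complete, let $D\subseteq E$ be a linear subspace and $S\in\mathcal L(D,F)$. Let $\mathcal U\subseteq\mathcal L(E,F)$ be nonempty and for each $U\in\mathcal U$ let $\epsilon_U>0$ be such that $\|U-V\|\le\max(\epsilon_U,\epsilon_V)$ for all $U,V\in\mathcal U$, and $\|Sx-Ux\|\le\epsilon_U\|x\|$ for all $U\in\mathcal U$ and $x\in D$. Then there exists $\overline S\in\mathcal L(E,F)$ with $\overline S|_D=S$ and $\|\overline S-U\|\le\epsilon_U$ for every $U\in\mathcal U$.
   Context: $\mathbb K$: nontrivially normed field with ultrametric absolute value; normed space over $\mathbb K$: normed vector space with $\|x+y\|\le\max(\|x\|,\|y\|)$. $\mathcal L(X,Y)$ is the space of continuous linear maps with operator norm. Spherically complete: every decreasing sequence of closed balls (radii $\ge0$) has nonempty intersection. *)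

(* Defs.v *)
From HB Require Import structures.
From mathcomp Require Import all_boot all_order all_algebra.
From mathcomp Require Import all_classical reals.
Set Implicit Arguments. Unset Strict Implicit. Unset Printing Implicit Defensive.
Import Order.TTheory GRing.Theory Num.Theory.
Local Open Scope ring_scope.
Local Open Scope classical_set_scope.

Record nontriv_ultra_abs (R : realType) (K : fieldType) (abs : K -> R) : Prop := {
  abs_ge0 : forall a, 0 <= abs a;
  abs_eq0 : forall a, abs a = 0 <-> a = 0;
  absM : forall a b, abs (a * b) = abs a * abs b;
  abs_ultra : forall a b, abs (a + b) <= Num.max (abs a) (abs b);
  abs_nontriv : exists a, abs a != 0 /\ abs a != 1
}.

Record ultra_norm (R : realType) (K : fieldType) (abs : K -> R)
    (E : lmodType K) (nrm : E -> R) : Prop := {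
  nrm_ge0 : forall x, 0 <= nrm x;
  nrm_eq0 : forall x, nrm x = 0 <-> x = 0;
  nrmZ : forall a x, nrm (a *: x) = abs a * nrm x;
  nrm_ultra : forall x y, nrm (x + y) <= Num.max (nrm x) (nrm y)
}.

Definition cball (R : realType) (K : fieldType) (E : lmodType K) (nrm : E -> R)
  (a : E) (r : R) : set E := [set x | nrm (x - a) <= r].

Definition spherically_complete (R : realType) (K : fieldType) (E : lmodType K)
  (nrm : E -> R) : Prop :=
  forall (a : nat -> E) (r : nat -> R),
    (forall n, 0 <= r n) ->
    (forall n, cball nrm (a n.+1) (r n.+1) `<=` cball nrm (a n) (r n)) ->
    exists x, forall n, cball nrm (a n) (r n) x.

Definition lin_subspace (K : fieldType) (E : lmodType K) (D : set E) : Prop :=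
  D 0 /\ forall (a : K) x y, D x -> D y -> D (a *: x + y).

Definition linear_on (K : fieldType) (E F : lmodType K) (D : set E) (T : E -> F) : Prop :=
  forall (a : K) x y, D x -> D y -> T (a *: x + y) = a *: T x + T y.

Definition continuous_on (R : realType) (K : fieldType) (E F : lmodType K)
  (nE : E -> R) (nF : F -> R) (D : set E) (T : E -> F) : Prop :=
  forall x0, D x0 -> forall e : R, 0 < e -> exists2 d : R, 0 < d &
    forall x, D x -> nE (x - x0) < d -> nF (T x - T x0) < e.

Definition cont_lin_on (R : realType) (K : fieldType) (E F : lmodType K)
  (nE : E -> R) (nF : F -> R) (D : set E) (T : E -> F) : Prop :=
  linear_on D T /\ continuous_on nE nF D T.

(* Operator norm ||T|| = sup { ||T x|| / ||x|| : x <> 0 } (sup of empty set is 0). *)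
Definition opnorm (R : realType) (K : fieldType) (E F : lmodType K)
  (nE : E -> R) (nF : F -> R) (T : E -> F) : R :=
  sup [set q | exists x, x != 0 /\ q = nF (T x) / nE x].

(* Main.v *)
Require Import Defs.
From mathcomp Require Import all_boot all_order all_algebra.
From mathcomp Require Import all_classical reals.
From mathcomp Require Import ring lra.
Import Order.TTheory GRing.Theory Num.Theory.
Local Open Scope ring_scope.
Local Open Scope classical_set_scope.
Set Implicit Arguments. Unset Strict Implicit. Unset Printing Implicit Defensive.

Lemma bern (R : realType) (h : R) n : 0 <= h -> 1 + n%:R * h <= (1 + h) ^+ n.
Proof.
move=> h0; elim: n => [|n IH]; first by rewrite mul0r addr0 expr0.
rewrite exprS -natr1.
have H1 : 0 <= n%:R * h by apply: mulr_ge0.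
have H2 : 0 <= (1+h) by lra.
have := ler_wpM2l H2 IH. 
have : 0 <= n%:R * h * h by apply: mulr_ge0.
nra.
Qed.

Lemma pow_small (R : realType) (q t : R) : 0 < q -> q < 1 -> 0 < t ->
  exists m, q ^+ m < t.
Proof.
move=> q0 q1 t0.
set h := q^-1 - 1.
have h0 : 0 < h by rewrite /h subr_gt0 invf_gt1.
have [m Hm] : exists m : nat, t^-1 < m%:R * h.
  exists (Num.bound (t^-1 / h)).
  have tp : 0 < t^-1 by rewrite invr_gt0.
  have := archi_boundP (ltW (divr_gt0 tp h0)).
  by rewrite ltr_pdivrMr.
exists m.
have := @bern _ h m (ltW h0).
rewrite /h addrCA subrr addr0 exprVn => Hb.
have Hq : 0 < q ^+ m by apply: exprn_gt0.
have : t^-1 < (q ^+ m)^-1.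
  apply: (lt_le_trans Hm); apply: le_trans Hb; rewrite lerDr //.

by rewrite ltf_pV2 ?posrE.
Qed.


Lemma shell (R : realType) (q d s : R) : 0 < q -> q < 1 -> 0 < d -> 0 < s ->
  exists m, (q * d <= q ^+ m * s < d) \/ (q * d <= (q^-1) ^+ m * s < d).
Proof.
move=> q0 q1 d0 s0.
have [sd|ds] := ltP s d.
- have ex : exists m, (d <= (q^-1) ^+ m.+1 * s).
    have [m Hm] := pow_small q0 q1 (divr_gt0 s0 d0).
    exists m.
    have qm : 0 < q ^+ m by apply: exprn_gt0.
    have qm1 : q ^+ m.+1 <= q ^+ m by rewrite exprS ler_piMl // ltW.
    have qm1p : 0 < q ^+ m.+1 by apply: exprn_gt0.
    rewrite exprVn mulrC ler_pdivlMr //.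
    move: Hm; rewrite ltr_pdivlMr // => Hm.
    rewrite mulrC; apply: ltW; apply: le_lt_trans Hm.
    by apply: ler_wpM2r => //; apply: ltW.
  case: (ex_minnP ex) => m Pm minm.
  exists m; right; apply/andP; split.
  + apply: (@le_trans _ _ (q * ((q^-1)^+m.+1 * s))); first by rewrite ler_pM2l.
    rewrite exprSr le_eqVlt; apply/orP; left; apply/eqP.
    have qn : q != 0 by apply: lt0r_neq0.
    by field.
  + case: m Pm minm => [|k] Pk mink.
      by rewrite expr0 mul1r.
    rewrite ltNge; apply/negP => /mink; by rewrite ltnn.
- have ex : exists m, (q ^+ m * s < d).
    have [m Hm] := pow_small q0 q1 (divr_gt0 d0 s0).
    by exists m; rewrite -ltr_pdivlMr.
  case: (ex_minnP ex) => m Pm minm.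
  exists m; left; apply/andP; split => //.
  case: m Pm minm => [|k] Pk mink; first by move: Pk; rewrite expr0 mul1r ltNge ds.
  have : ~~ (q ^+ k * s < d) by apply/negP => /mink; rewrite ltnn.
  rewrite -leNgt => H; rewrite exprS -mulrA ler_pM2l //.
Qed.


Section Basics.
Variables (R : realType) (K : fieldType) (abs : K -> R).
Hypothesis habs : nontriv_ultra_abs abs.

Lemma abs0 : abs 0 = 0.
Proof. by apply/(abs_eq0 habs). Qed.

Lemma abs1 : abs 1 = 1.
Proof.
have h := absM habs 1 1; rewrite mulr1 in h.
have n1 : abs 1 != 0 by apply/eqP => /(abs_eq0 habs) /eqP; rewrite oner_eq0.
have : abs 1 * (abs 1 - 1) = 0 by rewrite mulrBr mulr1 -h subrr.
move/eqP; rewrite mulf_eq0 (negbTE n1) /= subr_eq0 => /eqP //.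
Qed.

Lemma absN1 : abs (-1) = 1.
Proof.
have h := absM habs (-1) (-1); rewrite mulrNN mulr1 abs1 in h.
have g := abs_ge0 habs (-1).
have : (abs (-1) - 1) * (abs (-1) + 1) = 0 by rewrite mulrDr !mulrBl -h; ring.
move/eqP; rewrite mulf_eq0 => /orP[]; first by rewrite subr_eq0 => /eqP.
by move=> /eqP H; exfalso; lra.
Qed.

Lemma absV (a : K) : a != 0 -> abs a^-1 = (abs a)^-1.
Proof.
move=> a0; have h := absM habs a a^-1; rewrite mulfV // abs1 in h.
have n : abs a != 0 by apply/eqP => /(abs_eq0 habs) /eqP; rewrite (negbTE a0).
by rewrite -[LHS]mul1r -(mulVf n) -mulrA -h mulr1.
Qed.

Lemma absX (a : K) m : abs (a ^+ m) = abs a ^+ m.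
Proof. by elim: m => [|m IH]; rewrite ?expr0 ?abs1 // !exprS (absM habs) IH. Qed.

Lemma exists_pi : exists p : K, 0 < abs p /\ abs p < 1.
Proof.
case: (abs_nontriv habs) => a [a0 a1].
have ga := abs_ge0 habs a.
have an : a != 0 by apply/eqP => e; move: a0; rewrite e abs0 eqxx.
have [lt1|ge1] := ltP (abs a) 1.
  by exists a; split => //; rewrite lt0r a0.
exists a^-1; rewrite absV //; split; first by rewrite invr_gt0 lt0r a0.
rewrite invf_lt1 ?lt0r ?a0 // lt_neqAle eq_sym a1 //.
Qed.

Variables (V : lmodType K) (n : V -> R).
Hypothesis hn : ultra_norm abs n.

Lemma nrm0 : n 0 = 0.
Proof. by apply/(nrm_eq0 hn). Qed.

Lemma nrmN x : n (- x) = n x.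
Proof. by rewrite -scaleN1r (nrmZ hn) absN1 mul1r. Qed.

Lemma nrmBC x y : n (x - y) = n (y - x).
Proof. by rewrite -nrmN opprB. Qed.

Lemma nrmB x y : n (x - y) <= Num.max (n x) (n y).
Proof. by rewrite -(nrmN y); apply: (nrm_ultra hn). Qed.

Lemma nrm3 x y z : n (x - z) <= Num.max (n (x - y)) (n (y - z)).
Proof. by have := nrm_ultra hn (x - y) (y - z); rewrite addrA subrK. Qed.

Lemma nrm_gt0 x : x != 0 -> 0 < n x.
Proof.
move=> x0; rewrite lt0r (nrm_ge0 hn) andbT; apply/eqP => /(nrm_eq0 hn) /eqP.
by rewrite (negbTE x0).
Qed.

End Basics.

Section Lin.
Variables (K : fieldType) (E F : lmodType K) (T : E -> F).
Hypothesis hT : linear_on setT T.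

Lemma lin0 : T 0 = 0.
Proof.
have := @hT 1 (0 : E) 0 I I; rewrite scale1r addr0 => /eqP.
by rewrite scale1r -subr_eq0 opprD addrA subrr add0r oppr_eq0 => /eqP.
Qed.

Lemma linD x y : T (x + y) = T x + T y.
Proof. by have := @hT 1 x y I I; rewrite !scale1r. Qed.

Lemma linZ a x : T (a *: x) = a *: T x.
Proof. by have := @hT a x 0 I I; rewrite !addr0 lin0 addr0. Qed.

Lemma linN x : T (- x) = - T x.
Proof. by rewrite -scaleN1r linZ scaleN1r. Qed.

Lemma linB x y : T (x - y) = T x - T y.
Proof. by rewrite linD linN. Qed.

End Lin.


Section Bounded.
Variables (R : realType) (K : fieldType) (abs : K -> R).
Hypothesis habs : nontriv_ultra_abs abs.
Variables (E F : lmodType K) (nE : E -> R) (nF : F -> R).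
Hypotheses (hE : ultra_norm abs nE) (hF : ultra_norm abs nF).

Lemma bounded (T : E -> F) : linear_on setT T ->
  (exists2 d, 0 < d & forall x, nE x < d -> nF (T x) < 1) ->
  exists C, forall x, nF (T x) <= C * nE x.
Proof.
move=> hT [d d0 Hd].
case: (exists_pi habs) => p [p0 p1].
exists ((abs p * d)^-1) => x.
case: (eqVneq x 0) => [->|x0].
  by rewrite lin0 // (nrm0 hF) (nrm0 hE) mulr0.
have s0 := nrm_gt0 hE x0.
have qd0 : 0 < abs p * d by apply: mulr_gt0.
have key : forall c, 0 < abs c -> abs p * d <= abs c * nE x -> abs c * nE x < d ->
    nF (T x) <= (abs p * d)^-1 * nE x.
  move=> c c0 lo hi.
  have : nF (T (c *: x)) < 1 by apply: Hd; rewrite (nrmZ hE).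
  rewrite linZ // (nrmZ hF) => H.
  rewrite mulrC ler_pdivlMr //.
  have N0 := nrm_ge0 hF (T x).
  have h1 : 0 <= nF (T x) * (abs c * nE x - abs p * d) by apply: mulr_ge0; lra.
  have h2 : 0 <= (1 - abs c * nF (T x)) * nE x by apply: mulr_ge0; lra.
  nra.
have pn : p != 0 by apply/eqP => e; move: p0; rewrite e (abs0 habs) ltxx.
case: (shell p0 p1 d0 s0) => m [/andP[lo hi]|/andP[lo hi]].
- apply: (key (p ^+ m)); rewrite ?(absX habs) //; exact: exprn_gt0.
- apply: (key (p^-1 ^+ m)); rewrite ?(absX habs) ?(absV habs) //.
  by apply: exprn_gt0; rewrite invr_gt0.
Qed.

Lemma opnorm_le (T : E -> F) c : 0 <= c -> (forall x, nF (T x) <= c * nE x) ->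
  opnorm nE nF T <= c.
Proof.
move=> c0 H; rewrite /opnorm.
set A := [set q | _].
case: (pselect (A !=set0)) => [ne|e]; last first.
  have -> : A = set0 by apply/seteqP; split => // y Ay; apply: e; exists y.
  by rewrite sup0.
apply: ge_sup => // y [x [x0 ->]].
by rewrite ler_pdivrMr ?(nrm_gt0 hE).
Qed.

Lemma opnorm_ge (T : E -> F) x : (exists C, forall x, nF (T x) <= C * nE x) ->
  nF (T x) <= opnorm nE nF T * nE x.
Proof.
move=> [C HC]; case: (eqVneq x 0) => [->|x0].
  rewrite (nrm0 hE) mulr0; have := HC 0; by rewrite (nrm0 hE) mulr0.
have s0 := nrm_gt0 hE x0.
rewrite -ler_pdivrMr //; rewrite /opnorm.
apply: sup_upper_bound; last by exists x; split.
split; first by exists (nF (T x) / nE x), x.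
exists C => y [z [z0 ->]]; by rewrite ler_pdivrMr ?(nrm_gt0 hE).
Qed.

End Bounded.


Section Family.
Variables (R : realType) (K : fieldType) (abs : K -> R).
Hypothesis habs : nontriv_ultra_abs abs.
Variables (F : lmodType K) (nF : F -> R).
Hypotheses (hF : ultra_norm abs nF) (hFsc : spherically_complete nF).

Lemma ball_step (a b y : F) (ra rb : R) : rb <= ra -> nF (b - a) <= Num.max rb ra ->
  nF (y - b) <= rb -> nF (y - a) <= ra.
Proof.
move=> le1 le2 le3; apply: (le_trans (nrm3 hF y b a)).
rewrite ge_max; apply/andP; split; first exact: (le_trans le3 le1).
by apply: (le_trans le2); rewrite ge_max le1 lexx.
Qed.

Lemma sc_family (I : Type) (c : I -> F) (r : I -> R) :
  (forall i, 0 <= r i) -> (forall i j, nF (c i - c j) <= Num.max (r i) (r j)) ->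
  exists y, forall i, nF (y - c i) <= r i.
Proof.
move=> r0 hij.
case: (pselect (exists i : I, True)) => [[i0 _]|noI]; last first.
  by exists 0 => i; exfalso; apply: noI; exists i.
case: (pselect (exists i, forall j, r i <= r j)) => [[i Hi]|nomin].
  exists (c i) => j; apply: (ball_step (b := c i) (rb := r i)) => //.
  by rewrite subrr (nrm0 hF).
set A := [set x | exists i, r i = x].
have Ane : nonempty A by exists (r i0), i0.
have Alb : has_lbound A by exists 0 => _ [i <-].
have hinf : has_inf A by [].
set rho := inf A.
have rholt : forall i, rho < r i.
  move=> i; rewrite lt_neqAle; apply/andP; split.
    apply/eqP => e; apply: nomin; exists i => j; rewrite -e.
    by apply: (ge_inf Alb); exists j.
  by apply: (ge_inf Alb); exists i.
have step : forall (n : nat) i, exists j, r j < r i /\ r j < rho + n.+1%:R^-1.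
  move=> n i.
  set eps := Num.min (r i) (rho + n.+1%:R^-1) - rho.
  have e0 : 0 < eps.
    rewrite /eps subr_gt0 lt_min rholt /= ltrDl invr_gt0 ltr0n //.
  have [_ [j <-] hj] := inf_adherent e0 hinf.
  exists j; move: hj; rewrite /eps addrC subrK lt_min => /andP[] //.
have [g' hg'] := choice (fun p : nat * I => step p.1 p.2).
pose g n i := g' (n, i).
have hg : forall n i, r (g n i) < r i /\ r (g n i) < rho + n.+1%:R^-1 by move=> n i; exact: (hg' (n, i)).
pose s := fix s n := if n is k.+1 then g k (s k) else i0.
have hs : forall n, r (s n.+1) < r (s n) by move=> n; case: (hg n (s n)).
have [y hy] := @hFsc (fun n => c (s n)) (fun n => r (s n)) (fun n => r0 _)
  (fun n x hx => ball_step (ltW (hs n)) (hij _ _) hx).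
exists y => j.
have [k hk] := ltr_add_invr (rholt j).
have hk2 : r (s k.+1) < r j.
  apply: lt_trans hk; by case: (hg k (s k)).
apply: (ball_step (b := c (s k.+1)) (rb := r (s k.+1))) => //.
- exact: ltW.
- exact: hy.
Qed.
End Family.


Section Ids.
Variables (K : fieldType) (V : lmodType K).
Lemma id1 (a b c w v : V) : a + b - w - (c - v) = (a - (w - v)) + (b - c).
Proof.
rewrite !opprB -!addrA; congr (_ + _).
by rewrite addrCA [RHS]addrCA; congr (_ + _); rewrite addrCA.
Qed.
Lemma id2 (x z e : V) : x + e = (x - z) + (z + e).
Proof. by rewrite addrA subrK. Qed.
Lemma id3 (x z e : V) : (x + e) - (z + e) = x - z.
Proof. by rewrite opprD addrACA subrr addr0. Qed.
Lemma id4 (a l1 l2 : K) (x1 x2 e : V) :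
  a *: (x1 + l1 *: e) + (x2 + l2 *: e) = (a *: x1 + x2) + (a * l1 + l2) *: e.
Proof. by rewrite scalerDr addrACA scalerA scalerDl. Qed.
Lemma id5 (a : K) (w y u : V) : a *: w + a *: y - a *: u = a *: (y - (u - w)).
Proof. by rewrite opprB scalerDr scalerBr [a *: w + _]addrC -addrA. Qed.
Lemma id6 (x y : V) : x = (x - y) + y.
Proof. by rewrite subrK. Qed.
End Ids.

Section Main.
Variables (R : realType) (K : fieldType) (abs : K -> R).
Hypothesis habs : nontriv_ultra_abs abs.
Variables (E F : lmodType K) (nE : E -> R) (nF : F -> R).
Hypotheses (hE : ultra_norm abs nE) (hF : ultra_norm abs nF).
Hypothesis hFsc : spherically_complete nF.
Variables (UU : set (E -> F)) (eps : (E -> F) -> R).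
Hypothesis hUU : forall U, UU U -> cont_lin_on nE nF setT U.
Hypothesis heps : forall U, UU U -> 0 < eps U.
Hypothesis hUV : forall U V, UU U -> UU V ->
     opnorm nE nF (fun x => U x - V x) <= Num.max (eps U) (eps V).

Definition goodG (G : set (E * F)) :=
 [/\ G (0,0), (forall a p q, G p -> G q -> G (a *: p.1 + q.1, a *: p.2 + q.2)) &
  (forall p U, G p -> UU U -> nF (p.2 - U p.1) <= eps U * nE p.1)].

Lemma UV_bound U V z : UU U -> UU V ->
  nF (U z - V z) <= Num.max (eps U) (eps V) * nE z.
Proof.
move=> hU hV.
have [lU cU] := hUU hU; have [lV cV] := hUU hV.
have lT : linear_on setT (fun x => U x - V x).
  move=> a x y _ _ /=; rewrite (linD lU) (linZ lU) (linD lV) (linZ lV).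
  by rewrite scalerBr opprD addrACA.
have bT : exists C, forall x, nF (U x - V x) <= C * nE x.
  apply: (bounded habs hE hF lT).
  have [d1 d10 H1] := cU 0 I 1 ltr01.
  have [d2 d20 H2] := cV 0 I 1 ltr01.
  exists (Num.min d1 d2); first by rewrite lt_min d10 d20.
  move=> x; rewrite lt_min => /andP[x1 x2].
  have := H1 x I; rewrite subr0 (lin0 lU) subr0 => /(_ x1) h1.
  have := H2 x I; rewrite subr0 (lin0 lV) subr0 => /(_ x2) h2.
  apply: (le_lt_trans (nrmB habs hF _ _)).
  by rewrite gt_max h1 h2.
apply: (le_trans (opnorm_ge hE z bT)).
by apply: ler_wpM2r; [exact: (nrm_ge0 hE)|exact: hUV].
Qed.

Lemma good_sub G x w z v : goodG G -> G (x,w) -> G (z,v) -> G (x - z, w - v).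
Proof.
case=> _ cl _ hxw hzv; have := cl (-1) (z,v) (x,w) hzv hxw.
by rewrite /= !scaleN1r ![- _ + _]addrC.
Qed.

Lemma good_scale G a x w : goodG G -> G (x,w) -> G (a *: x, a *: w).
Proof.
case=> h0 cl _ hxw; have := cl a (x,w) (0,0) hxw h0.
by rewrite /= !addr0.
Qed.

Lemma pair_ok G e U V x w z v : goodG G -> UU U -> UU V -> G (x,w) -> G (z,v) ->
  eps U <= eps V ->
  nF ((U (x + e) - w) - (V (z + e) - v)) <=
    Num.max (eps U * nE (x + e)) (eps V * nE (z + e)).
Proof.
move=> hG hU hV hxw hzv le.
have [lU _] := hUU hU.
rewrite {1}(id2 x z e) (linD lU) id1.
apply: (le_trans (nrm_ultra hF _ _)); rewrite ge_max; apply/andP; split.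
- rewrite (nrmBC habs hF).
  have hb : forall p U, G p -> UU U -> nF (p.2 - U p.1) <= eps U * nE p.1.
    by case: hG.
  have := hb (x - z, w - v) U (good_sub hG hxw hzv) hU => /= h1.
  apply: (le_trans h1).
  have : nE (x - z) <= Num.max (nE (x + e)) (nE (z + e)).
    by rewrite -(id3 x z e); apply: (nrmB habs hE).
  rewrite le_max => /orP[] hn; rewrite le_max; apply/orP.
  + by left; apply: ler_wpM2l => //; apply: ltW; apply: heps.
  + right; apply: (le_trans (ler_wpM2l (ltW (heps hU)) hn)).
    by apply: ler_wpM2r => //; apply: (nrm_ge0 hE).
- rewrite le_max; apply/orP; right.
  by have := UV_bound (z + e) hU hV; rewrite (max_r le).
Qed.

Lemma pair_ok' G e U V x w z v : goodG G -> UU U -> UU V -> G (x,w) -> G (z,v) ->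
  nF ((U (x + e) - w) - (V (z + e) - v)) <=
    Num.max (eps U * nE (x + e)) (eps V * nE (z + e)).
Proof.
move=> hG hU hV hxw hzv.
have [le|lt] := leP (eps U) (eps V); first exact: (pair_ok e hG hU hV hxw hzv le).
by rewrite (nrmBC habs hF) maxC; apply: (pair_ok e hG hV hU hzv hxw); apply: ltW.
Qed.

Lemma ext_step G e : goodG G -> exists y,
  goodG [set p | exists q l, G q /\ p = (q.1 + l *: e, q.2 + l *: y)].
Proof.
move=> hG; have hG' := hG; case: hG' => h0 cl hb.
pose I := {i : (E -> F) * (E * F) | UU i.1 /\ G i.2}.
pose c (i : I) := (sval i).1 ((sval i).2.1 + e) - (sval i).2.2.
pose r (i : I) := eps (sval i).1 * nE ((sval i).2.1 + e).
have [y hy] : exists y, forall i : I, nF (y - c i) <= r i.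
  apply: (sc_family hF hFsc).
  - move=> [[U [x w]] [hU hxw]]; rewrite /r /=; apply: mulr_ge0.
      exact: (ltW (heps hU)).
    exact: (nrm_ge0 hE).
  - move=> [[U [x w]] [hU hxw]] [[V [z v]] [hV hzv]]; rewrite /c /r /=.
    exact: (pair_ok' e hG hU hV hxw hzv).
exists y; split.
- by exists (0,0), 0; split => //=; rewrite !scale0r !addr0.
- move=> a p q [q1 [l1 [hq1 ->]]] [q2 [l2 [hq2 ->]]] /=.
  exists (a *: q1.1 + q2.1, a *: q1.2 + q2.2), (a * l1 + l2); split.
    exact: cl.
  by rewrite /= !id4.
- move=> p U [[x w] [l [hxw ->]]] hU /=.
  have [lU _] := hUU hU.
  case: (eqVneq l 0) => [->|l0].
    rewrite !scale0r !addr0; exact: (hb (x,w) U hxw hU).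
  have hx'w' : G (l^-1 *: x, l^-1 *: w) := good_scale _ hG hxw.
  have hyi := hy (exist _ (U, (l^-1 *: x, l^-1 *: w)) (conj hU hx'w')).
  rewrite /c /r /= in hyi.
  have ex : x + l *: e = l *: (l^-1 *: x + e).
    by rewrite scalerDr scalerA mulfV // scale1r.
  have ew : w + l *: y = l *: (l^-1 *: w) + l *: y.
    by rewrite scalerA mulfV // scale1r.
  rewrite ex (linZ lU) ew id5 (nrmZ hF) (nrmZ hE) mulrCA.
  by apply: ler_wpM2l => //; apply: (abs_ge0 habs).
Qed.

End Main.


Unset Implicit Arguments.
Theorem proposition5p2 (R : realType) (K : fieldType) (abs : K -> R)
  (E F : lmodType K) (nE : E -> R) (nF : F -> R)
  (habs : nontriv_ultra_abs abs)
  (hE : ultra_norm abs nE) (hF : ultra_norm abs nF)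
  (hFsc : spherically_complete nF)
  (D : set E) (hD : lin_subspace D)
  (S : E -> F) (hS : cont_lin_on nE nF D S)
  (UU : set (E -> F)) (hUUne : UU !=set0)
  (hUU : forall U, UU U -> cont_lin_on nE nF setT U)
  (eps : (E -> F) -> R) (heps : forall U, UU U -> 0 < eps U)
  (hUV : forall U V, UU U -> UU V ->
     opnorm nE nF (fun x => U x - V x) <= Num.max (eps U) (eps V))
  (hSU : forall U x, UU U -> D x -> nF (S x - U x) <= eps U * nE x) :
  exists Sbar : E -> F,
    [/\ cont_lin_on nE nF setT Sbar,
        (forall x, D x -> Sbar x = S x) &
        (forall U, UU U -> opnorm nE nF (fun x => Sbar x - U x) <= eps U)].
Proof.
have [U0 hU0] := hUUne.
have [lS _] := hS.
have [D0 Dcl] := hD.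
have S0 : S 0 = 0.
  have := lS 1 0 0 D0 D0; rewrite scale1r addr0 => /eqP.
  by rewrite scale1r -subr_eq0 opprD addrA subrr add0r oppr_eq0 => /eqP.
pose good := goodG nE nF UU eps.
pose G0 := [set p : E * F | D p.1 /\ p.2 = S p.1].
have gG0 : good G0.
  split.
  - by split => //=; rewrite S0.
  - move=> a [x1 w1] [x2 w2] [/= d1 ->] [/= d2 ->]; split => /=; first exact: Dcl.
    by rewrite lS.
  - by move=> [x w] U [/= dx ->] hU /=; apply: hSU.
have good_local : forall H : set (E * F), H (0,0) ->
    (forall p q, H p -> H q -> exists G', [/\ good G', G' `<=` H, G' p & G' q]) ->
    good H.
  move=> H H0 Hl; split => //.
  - move=> a p q hp hq; have [G' [[_ cl _] sub gp gq]] := Hl p q hp hq.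
    by apply: sub; apply: cl.
  - move=> p U hp hU; have [G' [[_ _ hb] sub gp _]] := Hl p p hp hp.
    exact: hb.
pose P := fun A : set (E * F) => good (A `|` G0).
have [A [PA maxA]] : exists A, P A /\ forall B, A `<` B -> ~ P B.
  apply: Zorn_bigcup => Fam FP tot.
  apply: good_local; first by right; case: gG0.
  move=> p q [[X FX Xp]|p0] [[Y FY Yq]|q0].
  - have [XY|YX] := tot X Y FX FY.
    + exists (Y `|` G0); split => //; first exact: FP.
      * move=> z [Yz|z0]; [left; exists Y|right] => //.
      * by left; apply: XY.
      * by left.
    + exists (X `|` G0); split => //; first exact: FP.
      * move=> z [Xz|z0]; [left; exists X|right] => //.
      * by left.
      * by left; apply: YX.
  - exists (X `|` G0); split => //; first exact: FP.
    * move=> z [Xz|z0]; [left; exists X|right] => //.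
    * by left.
    * by right.
  - exists (Y `|` G0); split => //; first exact: FP.
    * move=> z [Yz|z0]; [left; exists Y|right] => //.
    * by right.
    * by left.
  - by exists G0; split => // z z0; right.
set G := A `|` G0.
have gG : good G := PA.
have [g0 gcl gb] := gG.
have fun_G : forall z w w', G (z,w) -> G (z,w') -> w = w'.
  move=> z w w' h1 h2.
  have := good_sub gG h2 h1; rewrite subrr => h3.
  have := gb _ U0 h3 hU0; rewrite /= (lin0 (hUU U0 hU0).1) subr0 (nrm0 hE) mulr0 => h.
  have : nF (w' - w) = 0 by apply: le_anti; rewrite h (nrm_ge0 hF).
  by move/(nrm_eq0 hF)/eqP; rewrite subr_eq0 => /eqP ->.
have tot : forall z, exists w, G (z, w).
  move=> z; apply: contrapT => nz.
  have [y gy] := ext_step habs hE hF hFsc hUU heps hUV z gG.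
  set B := [set p | _] in gy.
  have GB : forall p, G p -> B p.
    move=> [x w] hp; exists (x, w), 0; split => //=.
    by rewrite !scale0r !addr0.
  apply: (maxA B).
  - split; first by move=> p Ap; apply: GB; left.
    move=> BA; apply: nz; exists y; left; apply: BA.
    by exists (0,0), 1; split => //=; rewrite !scale1r !add0r.
  - rewrite /P; have -> : B `|` G0 = B.
      by apply/setUidPl => p p0; apply: GB; right.
    exact: gy.
have [f hf] := choice tot.
have lin_f : linear_on setT f.
  move=> a x x' _ _; apply: (fun_G _ _ _ (hf (a *: x + x'))).
  exact: (gcl a (x, f x) (x', f x') (hf x) (hf x')).
exists f; split.
- split => // x0 _ e' e0.
  have [lU cU] := hUU U0 hU0.
  have [d1 d10 H1] := cU x0 I e' e0.
  have ep0 := heps U0 hU0.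
  exists (Num.min d1 (e' / eps U0)); first by rewrite lt_min d10 divr_gt0.
  move=> x _; rewrite lt_min => /andP[h1 h2].
  rewrite -(linB lin_f) (id6 (f (x - x0)) (U0 (x - x0))).
  apply: (le_lt_trans (nrm_ultra hF _ _)); rewrite gt_max; apply/andP; split.
  + apply: (le_lt_trans (gb (x - x0, f (x - x0)) U0 (hf _) hU0)) => /=.
    by move: h2; rewrite ltr_pdivlMr // mulrC.
  + by rewrite (linB lU); apply: H1.
- by move=> x dx; apply: (fun_G _ _ _ (hf x)); right.
- move=> U hU; apply: (opnorm_le hE (ltW (heps U hU))) => x.
  exact: (gb (x, f x) U (hf x) hU).
Qed.
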